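(* Let $X$ be an infinite compact metrizable space, $h\colon X\to X$ a minimal homeomorphism, and suppose $(X,h)$ has the topological small boundary property. Let $\varepsilon>0$. Then for any closed set $F\subset X$ and any open set $U\subset X$ with $F\subset U$, there exist a closed set $K\subset X$ and an open set $V\subset X$ such that (1) $F\subset\mathrm{int}(K)\subset K\subset V\subset\overline{V}\subset U$; (2) $\partial K$ and $\partial V$ are topologically $h$-small; (3) $\mu(V\setminus K)<\varepsilon$ for all $\mu\in M_h(X)$.
   Context: $M_h(X)$ denotes the set of $h$-invariant Borel probability measures on $X$; $\partial A$ is the boundary of $A$. A closed set $F\subset X$ is topologically $h$-small if there is $m\in\mathbb{Z}_{+}$ such that whenever $d(0),\dots,d(m)$ are $m+1$ distinct integers, $h^{d(0)}(F)\cap\cdots\cap h^{d(m)}(F)=\varnothing$. $(X,h)$ has the topological small boundary property if whenever $F,K\subset X$ are disjoint compact sets, there exist open sets $U,V\subset X$ with $F\subset U$, $K\subset V$, $\overline{U}\cap\overline{V}=\varnothing$ and $\partial U$ topologically $h$-small. *)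

(* Defs.v *)
From HB Require Import structures.
From mathcomp Require Import all_boot all_order all_algebra.
From mathcomp Require Import all_classical all_reals all_analysis.
Set Implicit Arguments. Unset Strict Implicit. Unset Printing Implicit Defensive.
Import Order.TTheory GRing.Theory Num.Theory.
Local Open Scope classical_set_scope.
Local Open Scope ring_scope.

Definition homeomorphism (X : topologicalType) (h : X -> X) : Prop :=
  continuous h /\ exists g : X -> X, [/\ cancel h g, cancel g h & continuous g].

Definition minimal_map (X : topologicalType) (h : X -> X) : Prop :=
  forall A : set X, closed A -> h @` A = A -> A = set0 \/ A = setT.

Definition boundary (X : topologicalType) (A : set X) : set X :=
  closure A `\` A°.

(* image of A under h^d for an integer d (h a bijection):
   h^n(A) for d = n >= 0, and h^{-(n+1)}(A) = preimage of A under h^(n+1)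
   for d = -(n+1). *)
Definition zimage (X : Type) (h : X -> X) (d : int) (A : set X) : set X :=
  match d with
  | Posz n => iter n h @` A
  | Negz n => iter n.+1 h @^-1` A
  end.

Definition top_small (X : topologicalType) (h : X -> X) (F : set X) : Prop :=
  closed F /\
  exists m : nat, forall d : 'I_m.+1 -> int, injective d ->
    \bigcap_(i in [set: 'I_m.+1]) zimage h (d i) F = set0.

Definition top_small_boundary_property (X : topologicalType) (h : X -> X) : Prop :=
  forall F K : set X, compact F -> compact K -> F `&` K = set0 ->
    exists U V : set X, [/\ open U /\ open V, F `<=` U, K `<=` V,
      closure U `&` closure V = set0 & top_small h (boundary U)].

Definition borel_type (X : ptopologicalType) := g_sigma_algebraType (@open X).

Definition invariant_measure (R : realType) (X : ptopologicalType) (h : X -> X)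
  (mu : probability (borel_type X) R) : Prop :=
  forall A : set (borel_type X), measurable A -> mu (h @^-1` A) = mu A.

(* Main.v *)
Require Import Defs.
From HB Require Import structures.
From mathcomp Require Import all_boot all_order all_algebra.
From mathcomp Require Import all_classical all_reals all_analysis.
From mathcomp Require Import measurable_realfun finmap.
Import Order.TTheory GRing.Theory Num.Theory.
Local Open Scope classical_set_scope.
Local Open Scope ring_scope.

Lemma iter_cont (X : topologicalType) (h : X -> X) n :
  continuous h -> continuous (iter n h).
Proof.
move=> hc; elim: n => [|n IH] x /=; first exact: cvg_id.
exact: (continuous_comp (IH x) (hc _)).
Qed.

Lemma open_iter (X : topologicalType) (h : X -> X) n (A : set X) :
  continuous h -> open A -> open (iter n h @^-1` A).
Proof. by move=> hc; apply: open_comp => x _; apply: iter_cont. Qed.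

Definition cnt (X : Type) (h : X -> X) (N : nat) (O : set X) (x : X) : nat :=
  #|[pred d : 'I_N | `[< O (iter d.+1 h x) >] ]|.
Arguments cnt {X}.

Lemma cnt_sub (X : Type) (h : X -> X) N (A A' : set X) x y :
  (forall d : 'I_N, A (iter d.+1 h x) -> A' (iter d.+1 h y)) ->
  (cnt h N A x <= cnt h N A' y)%N.
Proof.
move=> H; apply: subset_leq_card; apply/fintype.subsetP => d; rewrite !inE.
by move=> /asboolP Hd; apply/asboolP; exact: H.
Qed.

Lemma open_bigcap_fin (X : topologicalType) (I : finType) (o : I -> set X) :
  (forall i, open (o i)) -> open (\bigcap_(i in setT) o i).
Proof.
move=> oo; rewrite openE => y Hy.
have : \forall z \near y, forall i, o i z.
  apply: filter_forall => i; apply: open_nbhs_nbhs; split => //; exact: Hy.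
by apply: filterS => z Hz i _; exact: Hz.
Qed.

Lemma open_bigcap_fset (X : topologicalType) (I : choiceType) (D : {fset I}) (o : I -> set X) :
  (forall i, i \in D -> open (o i)) -> open (\bigcap_(i in [set` D]) o i).
Proof.
move=> oo; rewrite openE => y Hy.
apply: filter_bigI => i iD; apply: open_nbhs_nbhs; split; first exact: oo.
exact: Hy.
Qed.

Lemma open_cnt_le (X : topologicalType) (h : X -> X) N m (C : set X) :
  continuous h -> closed C -> open [set x | (cnt h N C x <= m)%N].
Proof.
move=> hc cC; rewrite openE => x Hx.
have : \forall z \near x, forall d : 'I_N, ~ C (iter d.+1 h x) -> ~ C (iter d.+1 h z).
  apply: filter_forall => d.
  case: (pselect (C (iter d.+1 h x))) => Hc.
    by apply: nearW => z.
  have : open (iter d.+1 h @^-1` (~` C)).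
    by apply: open_iter => //; rewrite openC.
  move=> o; apply: filterS (open_nbhs_nbhs (conj o Hc)) => z Hz _; exact: Hz.
apply: filterS => z Hz /=; apply: leq_trans Hx.
apply: cnt_sub => d Cz; apply: contrapT => Cx; exact: (Hz d Cx).
Qed.

Lemma nbhd_cnt (X : ptopologicalType) (h : X -> X) (B : set X) N m :
  compact [set: X] -> continuous h ->
  (forall y, ~ B y -> exists O, open O /\ B `<=` O /\ ~ closure O y) ->
  (forall x, (cnt h N B x <= m)%N) ->
  exists O, open O /\ B `<=` O /\ forall x, (cnt h N O x <= m)%N.
Proof.
move=> cX hc reg hb.
pose D := [set O : set X | open O /\ B `<=` O].
pose f := fun O : set X => [set x | (cnt h N (closure O) x <= m)%N].
have fo : forall O, D O -> open (f O).
  by move=> O _; apply: open_cnt_le => //; exact: closed_closure.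
have cov : [set: X] `<=` cover D f.
  move=> x _.
  have ho : forall d : 'I_N, exists O : set X, open O /\ B `<=` O /\
      (~ B (iter d.+1 h x) -> ~ closure O (iter d.+1 h x)).
    move=> d; case: (pselect (B (iter d.+1 h x))) => Hb.
      by exists setT; split; [exact: openT | split => // ].
    have [W [oW [BW nW]]] := reg _ Hb; by exists W.
  have [g Hg] := choice ho.
  exists (\bigcap_(d in setT) g d).
    split; first by apply: open_bigcap_fin => d; case: (Hg d).
    by move=> y By d _; case: (Hg d) => _ [+ _]; apply.
  rewrite /f /=; apply: leq_trans (hb x).
  apply: cnt_sub => d Hd; apply: contrapT => nB.
  case: (Hg d) => _ [_ /(_ nB)]; apply.
  by apply: closure_subset Hd => y; apply; [].
have [Dp sDp covp] : finite_subset_cover D f [set: X].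
  by move: cX; rewrite (@compact_cover X); apply.
have DpD : forall i, i \in Dp -> D i by move=> i /sDp; rewrite in_setE.
exists (\bigcap_(i in [set` Dp]) i); split; [|split].
- by apply: (@open_bigcap_fset X _ Dp id) => i /DpD [].
- by move=> y By i /DpD [_]; apply.
- move=> x; have [i Hi fx] := covp x I.
  apply: leq_trans fx; apply: cnt_sub => d Hd.
  by apply: subset_closure; apply: Hd.
Qed.

Lemma open_mble (X : ptopologicalType) (A : set X) :
  open A -> measurable (A : set (borel_type X)).
Proof. by move=> oA; apply: sub_sigma_algebra. Qed.

Lemma mu_iter (R : realType) (X : ptopologicalType) (h : X -> X)
  (mu : probability (borel_type X) R) :
  continuous h -> invariant_measure h mu ->
  forall n (A : set X), open A -> mu (iter n h @^-1` A) = mu A.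
Proof.
move=> hc hinv n; elim: n => [|n IH] A oA //.
have -> : iter n.+1 h @^-1` A = iter n h @^-1` (h @^-1` A) by [].
rewrite IH; last exact: (@open_iter _ h 1).
by rewrite hinv //; apply: open_mble.
Qed.

Lemma sum_indic_cnt (X : Type) (h : X -> X) (N : nat) (O : set X) (x : X) (R : realType) :
  \sum_(d < N) (@indic X R (iter d.+1 h @^-1` O) x) = (cnt h N O x)%:R.
Proof.
rewrite /cnt -sum1_card natr_sum [RHS]big_mkcond /=.
apply: eq_bigr => d _; rewrite indicE inE /=.
by case: (pselect (O (h (iter d h x)))) => H; [rewrite mem_set // asboolT | rewrite memNset // asboolF].
Qed.

Lemma measure_bound (R : realType) (X : ptopologicalType) (h : X -> X)
  (mu : probability (borel_type X) R) (N m : nat) (O : set X) :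
  continuous h -> invariant_measure h mu -> open O ->
  (forall x, (cnt h N O x <= m)%N) ->
  (N%:R%:E * mu O <= m%:R%:E)%E.
Proof.
move=> hc hinv oO hb.
have mO : forall d : 'I_N, measurable (iter d.+1 h @^-1` O : set (borel_type X)).
  by move=> d; apply: open_mble; apply: open_iter.
have -> : (N%:R%:E * mu O = \sum_(d < N) mu (iter d.+1 h @^-1` O))%E.
  rewrite (eq_bigr (fun _ => mu O)); last by move=> d _; rewrite mu_iter.
  by rewrite sumr_const card_ord mule_natl.
have -> : (\sum_(d < N) mu (iter d.+1 h @^-1` O) =
   \sum_(d < N) \int[mu]_(x in setT) (\1_(iter d.+1 h @^-1` O) x)%:E)%E.
  by apply: eq_bigr => d _; rewrite integral_indic ?setIT.
have mf : forall d : 'I_N, measurable_fun [set: borel_type X]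
    (EFin \o (@indic X R (iter d.+1 h @^-1` O))).
  move=> d; apply/measurable_EFinP; exact: measurable_indic.
rewrite -(@ge0_integral_sum _ (borel_type X) R mu setT measurableT _
   (fun (d : 'I_N) (x : borel_type X) => (@indic X R (iter d.+1 h @^-1` O) x)%:E)) //.
apply: le_trans (_ : (\int[mu]_(x in setT) (cst m%:R%:E) x <= _)%E).
  apply: ge0_le_integral => //.
  - by move=> x _; apply: sume_ge0 => d _; rewrite lee_fin.
  - by apply: emeasurable_sum => d; apply: mf.
  - move=> x _; rewrite sumEFin lee_fin sum_indic_cnt ler_nat; exact: hb.
rewrite integral_cst //.
by have := probability_setT mu => /= ->; rewrite mule1.
Qed.

Lemma zimage_sub (X : Type) (h : X -> X) d (A B : set X) :
  A `<=` B -> zimage h d A `<=` zimage h d B.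
Proof.
case: d => n AB /=; first by move=> y [z Az <-]; exists z => //; apply: AB.
by move=> y; apply: AB.
Qed.

Lemma top_small_sub (X : topologicalType) (h : X -> X) (A B : set X) :
  closed A -> A `<=` B -> top_small h B -> top_small h A.
Proof.
move=> cA AB [_ [m Hm]]; split => //; exists m => d dinj.
rewrite -subset0 => x Hx; have := Hm d dinj; rewrite -subset0; apply => i _.
exact: (@zimage_sub X h (d i) A B AB x (Hx i I)).
Qed.

Lemma top_small_cnt (X : topologicalType) (h : X -> X) (B : set X) :
  top_small h B -> exists m, forall N x, (cnt h N B x <= m)%N.
Proof.
move=> [_ [m Hm]]; exists m => N x; rewrite leqNgt; apply/negP => lt.
pose S := [pred d : 'I_N | `[< B (iter d.+1 h x) >] ].
have le : (m.+1 <= #|S|)%N by [].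
pose f := fun i : 'I_m.+1 => Negz (nat_of_ord (enum_val (widen_ord le i))).
have finj : injective f.
  move=> i j /= [] /val_inj /enum_val_inj /(congr1 val) /= ij; exact: val_inj.
have := Hm f finj; rewrite -subset0 => /(_ x); apply => i _ /=.
have := enum_valP (widen_ord le i); rewrite inE => /asboolP.
done.
Qed.

Lemma boundary_closed (X : topologicalType) (A : set X) : closed (boundary A).
Proof.
rewrite /boundary setDE; apply: closedI; first exact: closed_closure.
exact/open_closedC/open_interior.
Qed.

Theorem proposition4p9 (R : realType) (X : pseudoPMetricType R) (h : X -> X)
  (eps : R) :
  hausdorff_space X -> compact [set: X] -> infinite_set [set: X] ->
  homeomorphism h -> minimal_map h -> top_small_boundary_property h ->
  0 < eps ->
  forall F U : set X, closed F -> open U -> F `<=` U ->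
  exists K V : set X,
    [/\ closed K, open V,
        F `<=` K° /\ K° `<=` K /\ K `<=` V /\ V `<=` closure V /\ closure V `<=` U,
        top_small h (boundary K) /\ top_small h (boundary V) &
        forall mu : probability (borel_type X) R, invariant_measure h mu ->
          (mu (V `\` K) < eps%:E)%E].
Proof.
move=> _ cX _ [hc _] _ tsbp eps0 F U cF oU FU.
have cpt : forall A : set X, closed A -> compact A.
  by move=> A cA; apply: subclosed_compact cA cX _.
have reg : forall B : set X, closed B -> forall y, ~ B y ->
    exists O, open O /\ B `<=` O /\ ~ closure O y.
  move=> B cB y By.
  have dBy : B `&` [set y] = set0.
    by rewrite -subset0 => z [Bz /= zy]; apply: By; rewrite -zy.
  have [U1 [V1 [[oU1 oV1] BU1 yV1 dis _]]] :=
    tsbp B [set y] (cpt _ cB) (compact_set1 (x := y)) dBy.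
  exists U1; split => //; split => // cy.
  have : (closure U1 `&` closure V1) y.
    by split => //; apply: subset_closure; apply: yV1.
  by rewrite dis.
have cU : closed (~` U) by apply: open_closedC.
have dFU : F `&` ~` U = set0.
  by rewrite -subset0 => z [Fz nUz]; apply: nUz; apply: FU.
have [W [V0 [[oW oV0] FW UV0 dis0 tsW]]] := tsbp F (~` U) (cpt _ cF) (cpt _ cU) dFU.
have WU : closure W `<=` U.
  move=> x cx; apply: contrapT => nUx.
  have : (closure W `&` closure V0) x.
    by split => //; apply: subset_closure; apply: UV0.
  by rewrite dis0.
have WWi : W `<=` W° by move: oW; rewrite openE.
pose B := boundary W.
have cB : closed B by apply: boundary_closed.
have [m hm] := @top_small_cnt _ h _ tsW.
pose N := (Num.Def.trunc (m%:R / eps)).+1.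
have mN : m%:R < N%:R * eps.
  rewrite -ltr_pdivrMr // /N; exact: truncnS_gt.
have [Q [oQ [BQ cQ]]] := @nbhd_cnt X h B N m cX hc (reg B cB) (hm N).
pose Q' := Q `&` ~` F.
have oQ' : open Q' by apply: openI => //; apply: closed_openC.
have BQ' : B `<=` Q'.
  move=> x Bx; split; first exact: BQ.
  by move=> Fx; case: Bx => _; apply; apply: WWi; apply: FW.
have cQ' : forall x, (cnt h N Q' x <= m)%N.
  by move=> x; apply: leq_trans (cQ x); apply: cnt_sub => d [].
have WWQ : closure W `<=` W `|` Q'.
  move=> x cx; case: (pselect (W x)) => Wx; [by left | right].
  by apply: BQ'; split => // /interior_subset.
have cC3 : closed (~` (U `&` (W `|` Q'))).
  by apply: open_closedC; apply: openI => //; apply: openU.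
have d3 : closure W `&` ~` (U `&` (W `|` Q')) = set0.
  by rewrite -subset0 => x [cx]; apply; split; [apply: WU | apply: WWQ].
have [V [V1 [[oV oV1] WV CV1 dis1 tsV]]] :=
  tsbp (closure W) _ (cpt _ (@closed_closure _ W)) (cpt _ cC3) d3.
have VU : closure V `<=` U `&` (W `|` Q').
  move=> x cx; apply: contrapT => nx.
  have : (closure V `&` closure V1) x.
    by split => //; apply: subset_closure; apply: CV1.
  by rewrite dis1.
have cC4 : closed (closure W `\` Q').
  by rewrite setDE; apply: closedI; [apply: closed_closure | apply: open_closedC].
have cW : closed (~` W) by apply: open_closedC.
have d4 : (closure W `\` Q') `&` ~` W = set0.
  rewrite -subset0 => x [[cx nO] nW]; apply: nO.
  by case: (WWQ x cx).
have [W2 [V2 [[oW2 oV2] W2W CV2 dis2 tsW2]]] :=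
  tsbp _ _ (cpt _ cC4) (cpt _ cW) d4.
have W2W' : closure W2 `<=` W.
  move=> x cx; apply: contrapT => nx.
  have : (closure W2 `&` closure V2) x.
    by split => //; apply: subset_closure; apply: CV2.
  by rewrite dis2.
have sub : W2 `<=` (closure W2)°.
  by rewrite -open_subsetE //; exact: subset_closure.
exists (closure W2), V; split.
- exact: closed_closure.
- exact: oV.
- split.
    move=> x Fx; apply: sub; apply: W2W; split; first by apply: subset_closure; apply: FW.
    by case.
  split; first exact: interior_subset.
  split; first by move=> x /W2W' /subset_closure; apply: WV.
  split; first exact: subset_closure.
  by move=> x /VU [].
- split => //.
  apply: (@top_small_sub X h _ (boundary W2)) tsW2; first exact: boundary_closed.
  move=> x [cx nx]; split.
    by move: cx; rewrite -(closure_id _).1 //; apply: closed_closure.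
  by move=> ix; apply: nx; apply: sub; apply: interior_subset ix.
move=> mu minv.
have VKQ : V `\` closure W2 `<=` Q'.
  move=> x [Vx nK]; have [_ [Wx|Qx]] := VU x (subset_closure Vx) => //.
  apply: contrapT => nQ; apply: nK; apply: subset_closure; apply: W2W.
  by split => //; apply: subset_closure.
have mVK : measurable (V `\` closure W2 : set (borel_type X)).
  rewrite setDE; apply: open_mble; apply: openI => //.
  by apply: closed_openC; apply: closed_closure.
have mQ : measurable (Q' : set (borel_type X)) by apply: open_mble.
have le1 : (mu (V `\` closure W2) <= mu Q')%E.
  by apply: le_measure => //; rewrite in_setE.
have le2 := @measure_bound R X h mu N m Q' hc minv oQ' cQ'.
rewrite ltNge; apply/negP => H.
have : ((N%:R * eps)%:E <= m%:R%:E)%E.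
  rewrite EFinM; apply: le_trans le2; apply: lee_wpmul2l; first by rewrite lee_fin.
  exact: le_trans H le1.
by rewrite lee_fin => /(lt_le_trans mN); rewrite ltxx.
Qed.
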